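(* The degrees of the state polynomials of 2-bridge knots are independent of the degrees of their Alexander polynomials. Specifically: (i) for every $N$ there exists a 2-bridge knot having an essential spanning surface whose state polynomial is linear (degree 1) while its Alexander polynomial has degree at least $N$ (e.g. the $(2,m)$ torus knot, $m$ odd, has a state polynomial of degree $1$ and Alexander polynomial of degree $m-1$); (ii) for every $N$ there exists a 2-bridge knot whose Alexander polynomial is quadratic and which has an essential spanning surface whose state polynomial has degree at least $N$ (e.g. the 2-bridge knot with continued fraction expansion $[2i,2j]$ has quadratic Alexander polynomial and state polynomials of degrees $2i$ and $2j$).
   Context: Let $K=K(\alpha,\beta)$ be a 2-bridge knot. Essential spanning surfaces $S$ ($\partial S=K$, incompressible and $\partial$-incompressible in the knot exterior) are, by Hatcher–Thurston, isotopic to standard plumbed surfaces associated to continued fraction expansions $\beta/\alpha=r+\cfrac{1}{n_1+\cfrac{1}{\cdots+\cfrac{1}{n_k}}}$, $|n_i|\ge2$, written $[n_1,\dots,n_k]$: $k$ vertically stacked bands, the $i$-th with $n_i$ half-twists, each with a parallel untwisted band, joined by horizontal disks at levels $0,\dots,k$. The curve system $x_1,\dots,x_k$ consists of the cores of the $k$ boxes; $x_i\cap x_{i+1}$ is one point, others disjoint. A state matrix $V_S$ has entries $v_{ij}=\mathrm{lk}(x_i,x_j^{i*})$ for $i\neq j$, where $x_j^{i*}$ is $x_j$ pushed off along a chosen normal near the intersection point with $x_i$ (and equal to $x_j$ if disjoint), and $v_{ii}=\frac12\mathrm{lk}(x_i,\tau(x_i))$, $\tau(x_i)$ the double push-off of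 $x_i$ to both sides of $S$. The state polynomial is $\Delta_S(t)=\det(V_S-tV_S^T)$ up to units $\pm t^m$, of degree $k$. When $S$ is orientable (all $n_i$ even; this is the unique Seifert surface among them, of minimal genus), $\Delta_S$ is the Alexander polynomial of $K$. *)

(* Defs.v *)
From HB Require Import structures.
From mathcomp Require Import all_boot all_order all_algebra.
Set Implicit Arguments. Unset Strict Implicit. Unset Printing Implicit Defensive.
Import Order.TTheory GRing.Theory Num.Theory.
Local Open Scope ring_scope.

(* The 2-bridge knot K(alpha, beta): alpha odd, alpha > 1, gcd(alpha,beta) = 1. *)
Definition two_bridge (alpha : nat) (beta : int) : Prop :=
  [/\ odd alpha, (1 < alpha)%N & coprime alpha `|beta|%N].

Fixpoint cf (ns : seq int) : rat :=
  match ns with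
  | [::] => 0
  | [:: n] => n%:~R
  | n :: s => n%:~R + (cf s)^-1
  end.

(* ns (with some integer r) is an admissible expansion of beta/alpha:
   beta/alpha = r + 1/[n_1,...,n_k], k >= 1, |n_i| >= 2.  By Hatcher--Thurston
   these index the essential spanning surfaces of K(alpha,beta). *)
Definition essential_expansion (alpha : nat) (beta : int) (ns : seq int) : Prop :=
  [/\ (0 < size ns)%N, all (fun n : int => (2 <= `|n|)%N) ns &
      exists r : int, beta%:~R / alpha%:R = r%:~R + (cf ns)^-1 :> rat].

(* The surface is orientable (a Seifert surface) iff all n_i are even. *)
Definition orientable_expansion (ns : seq int) : bool := all (fun n : int => ~~ odd `|n|) ns.

(* State matrix of the plumbed surface: v_ii = n_i/2, v_{i,i+1} = 1, v_{i+1,i} = 0,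
   all other entries 0 (x_i, x_j disjoint for |i-j|>1). *)
Definition state_matrix (ns : seq int) : 'M[rat]_(size ns) :=
  \matrix_(i, j) (if i == j then (ns`_i)%:~R / 2
                  else if (j == i.+1 :> nat) then 1 else 0).

Definition state_poly (ns : seq int) : {poly rat} :=
  \det (\matrix_(i, j) ((state_matrix ns i j)%:P - 'X * (state_matrix ns j i)%:P)).

(* Degree of a Laurent-type polynomial up to units +-t^m: highest minus lowest
   exponent with nonzero coefficient (0 for the zero polynomial). *)
Definition span_deg (p : {poly rat}) : nat :=
  ((size p).-1 - find (fun c : rat => c != 0%R) (polyseq p))%N.

Definition has_state_degree (alpha : nat) (beta : int) (d : nat) : Prop :=
  exists ns, essential_expansion alpha beta ns /\ span_deg (state_poly ns) = d.

(* The Alexander polynomial of K(alpha,beta) (= state polynomial of its Seifert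
   surface among the plumbed surfaces) has degree d. *)
Definition alexander_degree (alpha : nat) (beta : int) (d : nat) : Prop :=
  (exists ns, essential_expansion alpha beta ns /\ orientable_expansion ns) /\
  (forall ns, essential_expansion alpha beta ns -> orientable_expansion ns ->
     span_deg (state_poly ns) = d).

(* Main.v *)
Require Import Defs.
From HB Require Import structures.
From mathcomp Require Import all_boot all_order all_algebra.
From mathcomp Require Import zify ring lra.
Set Implicit Arguments. Unset Strict Implicit. Unset Printing Implicit Defensive.
Import Order.TTheory GRing.Theory Num.Theory.
Local Open Scope ring_scope.

Lemma span_state (ns : seq int) : all (fun n : int => n != 0) ns ->
  span_deg (state_poly ns) = size ns.
Proof.
move=> nz.
set k := size ns.
set V := state_matrix ns.
set W := V^T.
have Wtrig : is_trig_mx W.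
  apply/is_trig_mxP => i j lij; rewrite mxE /V /state_matrix mxE.
  have -> : (j == i) = false by apply/negbTE; rewrite neq_ltn lij orbT.
  have -> : (val i == (val j).+1) = false by apply/negbTE; rewrite neq_ltn ltnS (ltnW lij).
  by [].

have Wdiag : forall i, W i i = (ns`_i)%:~R / 2.
  by move=> i; rewrite mxE /V /state_matrix mxE eqxx.
have detW : \det W != 0.
  rewrite (det_trig Wtrig) prodf_seq_neq0; apply/allP => i _ /=.
  rewrite Wdiag mulf_neq0 // ?invr_eq0 // intr_eq0.
  by move/allP: nz; apply; rewrite mem_nth.
have Wu : W \in unitmx by rewrite unitmxE unitfE.
set A := V *m invmx W.
have eM : \matrix_(i, j) ((V i j)%:P - 'X * (V j i)%:P) =
   - (char_poly_mx A *m map_mx polyC W).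
  rewrite /char_poly_mx mulmxBl mul_scalar_mx -map_mxM /A mulmxKV //.
  by apply/matrixP => i j; rewrite !mxE opprB.
have ep : state_poly ns = ((-1) ^+ k * \det W) *: char_poly A.
  rewrite /state_poly -/V eM -scaleN1r detZ det_mulmx det_map_mx /=.
  rewrite -/(char_poly A) mulrC -mul_polyC rmorphM rmorphXn rmorphN rmorph1 /k; ring.
have sz : size (state_poly ns) = k.+1.
  by rewrite ep size_scale ?size_char_poly // mulf_neq0 // expf_neq0 // oppr_eq0 oner_eq0.
have c0 : (state_poly ns)`_0 != 0.
  rewrite ep coefZ char_poly_det mulf_neq0 // ?mulf_neq0 // ?expf_neq0 // ?oppr_eq0 ?oner_eq0 //.
  rewrite /A det_mulmx det_inv -det_tr -/W mulf_neq0 // invr_eq0 //.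
rewrite /span_deg sz /=.
move: c0; case: (polyseq (state_poly ns)) => [|c s] /=; first by rewrite ?eqxx.
by move=> ->; rewrite subn0.
Qed.

Lemma cfE (n : int) s : cf (n :: s) = n%:~R + (cf s)^-1.
Proof. by case: s => [|m s] //=; rewrite invr0 addr0. Qed.

Definition big2 (s : seq int) := all (fun n : int => (2 <= `|n|)%N) s.
Definition evens (s : seq int) := all (fun n : int => ~~ odd `|n|) s.

Lemma int_ge2 (n : int) : (2 <= `|n|)%N -> 2 <= `|n%:~R : rat|.
Proof.
move=> h; rewrite -intr_norm.
have : (2 <= `|n|%:Z)%R by lia.
by rewrite -(ler_int rat).
Qed.

Lemma cf_gt1 s : big2 s -> s != [::] -> 1 < `|cf s|.
Proof.
elim: s => [|n s IH] // /andP [hn hs] _.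
rewrite cfE; have h2 := int_ge2 hn.
case: s IH hs => [|m s] IH hs.
  by rewrite /= invr0 addr0; apply: lt_le_trans h2.
have h1 := IH hs isT.
have hi : `|(cf (m :: s))^-1| < 1.
  rewrite normfV invf_lt1 //; lra.
have := ler_normB (n%:~R + (cf (m :: s))^-1 : rat) ((cf (m :: s))^-1).
rewrite addrK; lra.
Qed.

Lemma cf_neq0 s : big2 s -> s != [::] -> cf s != 0.
Proof. by move=> h1 h2; have := cf_gt1 h1 h2; apply: contraTneq => ->; rewrite normr0. Qed.

Lemma cf_inv_lt1 s : big2 s -> `|(cf s)^-1| < 1.
Proof.
case: s => [|n s] h; first by rewrite /= invr0 normr0.
have := cf_gt1 h isT; rewrite normfV => h1; rewrite invf_lt1 //; lra.
Qed.

Lemma cf_uniq ns ms : big2 ns -> big2 ms -> evens ns -> evens ms ->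
  ns != [::] -> ms != [::] -> cf ns = cf ms -> ns = ms.
Proof.
elim: ns ms => [|n s IH] [|m t] // /andP[hn hs] /andP[hm ht] /andP[en es] /andP[em et] _ _.
rewrite !cfE => e.
have hs1 := cf_inv_lt1 hs; have ht1 := cf_inv_lt1 ht.
have enm : n = m.
  have : `|(n%:~R : rat) - m%:~R| < 2.
    have -> : (n%:~R : rat) - m%:~R = (cf t)^-1 - (cf s)^-1 by rewrite addrC; lra.
    have := ler_normB ((cf t)^-1) ((cf s)^-1); lra.
  rewrite -intrB -intr_norm.
  have -> : (2 : rat) = (2%:Z)%:~R by [].
  rewrite ltr_int => h; lia.
subst m; move/addrI: e => /invr_inj e; congr cons.
case: s t IH hs ht es et hs1 ht1 e => [|a s] [|b t] IH hs ht es et _ _ e //.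
- by have := @cf_neq0 (b :: t) ht isT; rewrite -e /= ?eqxx.
- by have := @cf_neq0 (a :: s) hs isT; rewrite e /= ?eqxx.
by apply: IH.
Qed.

Lemma cf_par s : evens s -> exists P Q : int, Q != 0 /\ odd `|P + Q| /\ cf s = P%:~R / Q%:~R.
Proof.
elim: s => [|n s IH]; first by move=> _; exists 0, 1; rewrite mul0r.
case/andP => en /IH [P [Q [Q0 [oPQ e]]]].
rewrite cfE e.
have [->|P0] := eqVneq P 0.
  exists n, 1; split => //; split; first by lia.
  by rewrite mul0r invr0 addr0 divr1.
have [a ea] : exists a, n = 2 * a by exists (n %/ 2)%Z; lia.
exists (n * P + Q), P; split => //; split.
  rewrite ea; lia.
rewrite invfM invrK intrD intrM; field.
by rewrite intr_eq0.
Qed.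

Lemma cf_notodd s (A B : int) : evens s -> odd `|A| -> odd `|B| ->
  cf s = A%:~R / B%:~R -> False.
Proof.
move=> es oA oB; have [P [Q [Q0 [oPQ ->]]]] := cf_par es.
have B0 : B != 0 by apply: contraTneq oB => ->.
move=> e.
have : (P * B)%:~R = (A * Q)%:~R :> rat.
  rewrite !intrM; move: e; rewrite -(intr_eq0 rat) in Q0; rewrite -(intr_eq0 rat) in B0.
  move=> e; apply: (mulIf (mulf_neq0 (invr_neq0 Q0) (invr_neq0 B0))).
  rewrite -[LHS]mulrA [X in _ * X]mulrCA mulfV // mulr1 e. field; by apply/andP.
move/intr_inj => h; lia.
Qed.

Fixpoint alt (b : bool) (k : nat) : seq int :=
  if k is k'.+1 then (if b then 2 else -2) :: alt (~~ b) k' else [::].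
Fixpoint wseq (b : bool) (k : nat) : seq int :=
  if k is k'.+1 then (if b then 2 else -2) :: wseq (~~ b) k'
  else [:: if b then 3 else -3].

Definition sg (b : bool) : rat := if b then 1 else -1.

Lemma cf_alt b k : cf (alt b k.+1) = sg b * (k.+2)%:R / (k.+1)%:R.
Proof.
elim: k b => [|k IH] b; first by case: b; rewrite /sg /=; field.
rewrite [alt b _]/= cfE IH.
case: b; rewrite /sg /=; field; rewrite ?pnatr_eq0 //.
all: have hk := ler0n rat k; by apply/andP; split; apply/negP => /eqP; lra.
Qed.

Lemma cf_wseq b k : cf (wseq b k) = sg b * (2 * k%:R + 3) / (2 * k%:R + 1).
Proof.
elim: k b => [|k IH] b.
  by case: b; rewrite /sg /=; field.
rewrite [wseq b _]/= cfE IH -[k.+1]addn1 natrD.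
have hk := ler0n rat k.
case: b; rewrite /sg /=; field.
all: by repeat (apply/andP; split); apply/negP => /eqP; lra.
Qed.

Lemma alt_props b k : [/\ size (alt b k) = k, big2 (alt b k), evens (alt b k)
   & all (fun n : int => n != 0) (alt b k)].
Proof.
elim: k b => [|k IH] b //.
case: b (IH true) (IH false) => [_ [h1 h2 h3 h4] | [h1 h2 h3 h4] _];
  rewrite /big2 /evens /= in h2 h3 h4 *; by rewrite h1 h2 h3 h4.
Qed.

Lemma wseq_props b k : [/\ size (wseq b k) = k.+1, big2 (wseq b k)
   & all (fun n : int => n != 0) (wseq b k)].
Proof.
elim: k b => [|k IH] b /=; first by case: b.
case: b (IH true) (IH false) => [_ [h1 h2 h4] | [h1 h2 h4] _];
  rewrite /big2 /= in h2 h4 *; by rewrite h1 h2 h4.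
Qed.

Lemma r01 (q : rat) (r : int) s : 0 < q < 1 -> big2 s ->
  q = r%:~R + (cf s)^-1 -> r = 0 \/ r = 1.
Proof.
move=> /andP[q0 q1] bs e.
have := cf_inv_lt1 bs; rewrite ltr_norml => /andP[h1 h2].
have a1 : (r%:~R : rat) < 2%:~R by lra.
have a2 : ((-1)%:~R : rat) < r%:~R by lra.
rewrite ltr_int in a1; rewrite ltr_int in a2; lia.
Qed.

Ltac nz := repeat match goal with |- is_true (_ && _) => apply/andP; split end; apply/negP => /eqP; lra.

Lemma ess_big2 a b ns : essential_expansion a b ns -> big2 ns /\ ns != [::].
Proof. by case=> h1 h2 _; split => //; rewrite -size_eq0 -lt0n. Qed.

Theorem proposition3p2 :
  (forall N : nat, exists (alpha : nat) (beta : int) (d : nat),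
     two_bridge alpha beta /\ has_state_degree alpha beta 1 /\
     alexander_degree alpha beta d /\ (N <= d)%N) /\
  (forall N : nat, exists (alpha : nat) (beta : int) (d : nat),
     two_bridge alpha beta /\ alexander_degree alpha beta 2 /\
     has_state_degree alpha beta d /\ (N <= d)%N).
Proof.
split => N.
- set k := N.*2.+1.
  have hk := ler0n rat k.
  have [a1 a2 a3 a4] := alt_props false k.+1.
  exists k.+2, 1, k.+1; split; last split; last split.
  + by split => //=; rewrite ?odd_double // coprimen1.
  + exists [:: (k.+2)%:Z]; split; last by rewrite span_state.
    split => //; exists 0; rewrite /=; field; apply/negP => /eqP; lra.
  + split.
      exists (alt false k.+1); split => //; split => //.
      exists 1; rewrite cf_alt /sg; field.
      by nz.
    move=> ms ess ems; have [bm nm] := ess_big2 ess.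
    case: ess => _ _ [r er].
    have q01 : 0 < (1%:~R : rat) / (k.+2)%:R < 1.
      apply/andP; split.
        by rewrite divr_gt0 // ltr0n.
      by rewrite mul1r invf_lt1 ?ltr0n // ltr1n.
    have [r0|r1] := r01 q01 bm er; subst r.
    * exfalso; apply: (@cf_notodd ms (k.+2)%:Z 1 ems) => //=.
        by rewrite odd_double.
      rewrite divr1; apply: (@invr_inj rat).
      have e2 : (cf ms)^-1 = 1%:~R / (k.+2)%:R by rewrite er; ring.
      by rewrite e2 mul1r.
    * have -> : ms = alt false k.+1.
        apply: cf_uniq => //; rewrite ?a1 //.
        apply: (@invr_inj rat); rewrite cf_alt /sg.
        have e2 : (cf ms)^-1 = 1%:~R / (k.+2)%:R - 1 by rewrite er; ring.
        rewrite e2; field.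
        by nz.
      by rewrite span_state // a1.
  + by rewrite /k -addnn; lia.
- set j := N.+1.
  have hj := ler0n rat j.
  set k := (j.*2).-1.
  have ek : k.*2.+1 = (j * 4).-1 by rewrite /k /j; lia.
  have [w1 w2 w4] := wseq_props false k.
  have ns0e : cf [:: (2 * j%:Z)%R; 2] = (j * 4).+1%:R / 2.
    by rewrite cfE /= intrM -[(j*4).+1]addn1 natrD natrM; field.
  exists (j * 4)%N.+1, (2%:Z), k.+1; split; last split; last split.
  + split => //=; first by rewrite oddM andbF.
      by rewrite coprimen2 /= oddM andbF.
  + have x5 : (5 : rat) <= (j * 4).+1%:R by rewrite (ler_nat rat 5) /j; lia.
    have exr : ((j * 4).+1%:R : rat) = 4 * j%:R + 1.
      by rewrite -[(j*4).+1]addn1 natrD natrM mulrC.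
    have q01 : 0 < (2%:~R : rat) / (j * 4).+1%:R < 1.
      apply/andP; split; first by rewrite divr_gt0 //; lra.
      rewrite ltr_pdivrMr; lra.
    have b0 : big2 [:: (2 * j%:Z)%R; 2] by rewrite /big2 /= /j; lia.
    have e0 : evens [:: (2 * j%:Z)%R; 2] by rewrite /evens /= /j; lia.
    split.
      exists [:: (2 * j%:Z)%R; 2]; split => //; split => //.
      exists 0; rewrite ns0e exr; field; nz.
    move=> ms ess ems; have [bm nm] := ess_big2 ess.
    case: ess => _ _ [r er].
    have [r0|r1] := r01 q01 bm er; subst r.
    * have -> : ms = [:: (2 * j%:Z)%R; 2].
        apply: cf_uniq => //.
        apply: (@invr_inj rat); rewrite ns0e.
        have e2 : (cf ms)^-1 = 2%:~R / (j * 4).+1%:R by rewrite er; ring.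
        rewrite e2 exr; field; nz.
      by rewrite span_state.
    * exfalso; apply: (@cf_notodd ms (- (4 * j%:Z + 1)) (4 * j%:Z - 1) ems).
      - rewrite /j; lia.
      - rewrite /j; lia.
      apply: (@invr_inj rat).
      have e2 : (cf ms)^-1 = 2%:~R / (j * 4).+1%:R - 1 by rewrite er; ring.
      rewrite e2 exr ?(intrN, intrD, intrM); field; nz.
  + have ekn : (k + 1 = j * 2)%N by rewrite /k /j; lia.
    have := congr1 (fun n : nat => n%:R : rat) ekn; rewrite /= natrD natrM => ekr.
    have ekr' : (k%:R : rat) = 2 * j%:R - 1 by move: ekr; rewrite mulr1n; lra.
    have exr : ((j * 4).+1%:R : rat) = 4 * j%:R + 1.
      by rewrite -[(j*4).+1]addn1 natrD natrM mulrC.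
    exists (wseq false k); split; last by rewrite span_state // w1.
    split => //.
    exists 1; rewrite cf_wseq /sg ekr' exr; field.
    have hj1 : (1 : rat) <= j%:R by rewrite ler1n.
    nz.
  + by rewrite /k /j; lia.
Qed.
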